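(* Fix $\omega$ and let $v$ be a blocked path. Define $\hat v(i)=v(i-\delta)+2\delta v'(i-\delta)$ and $\bar v^\delta[i]=\min\{j\in\delta\mathbb{Z}:\ j\ge \hat v(i)-\delta/2\}$ for $i\in\mathbb{Z}$. Let $w$ be the continuous function that is affine on each interval $[i-1+\delta,i+\delta]$, $i\in\mathbb{Z}$, with $w(i+\delta)=\hat v(i)$ for all $i$, and let $\bar w^\delta$ be the analogous function with $\bar w^\delta(i+\delta)=\bar v^\delta[i]$. Then $v\ge w$ and $v+\delta/2\ge \bar w^\delta$ on $\mathbb{R}$.
   Context: Fix $0<\delta\ll1/2$, $F>0$. Let $\mathbb{Z}^*=\mathbb{Z}+\tfrac12$, $b_{i,j}=(i,j)$; $\phi\in C_c^\infty(\mathbb{R}^2)$ nonnegative with support in $[-\delta,\delta]^2$, $\phi_{i,j}(x,s)=\phi((x,s)-b_{i,j})$; $(l(i,j)(\omega))_{(i,j)\in\mathbb{Z}\times\mathbb{Z}^*}$ nonnegative (i.i.d. exponential) random variables. For small $\varepsilon>0$ let $A=\mathbb{R}\setminus\bigcup_{i\in\mathbb{Z}}(i-\delta,i+\delta)$, $A_\varepsilon=\mathbb{R}\setminus\bigcup_{i\in\mathbb{Z}}(i-\delta-\varepsilon,i+\delta+\varepsilon)$, and $\chi_A^\varepsilon$ a smooth function with $\chi_{A_\varepsilon}\le\chi_A^\varepsilon\le\chi_A$. A blocked path is a function $v\in C^1_{loc}(\mathbb{R})$ such that for every $i\in\mathbb{Z}$: $v''(x)=-F\chi_A^\varepsilon(x)$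 on $(i+\delta,i+1-\delta)$ and $v''(x)=\sum_{j\in\mathbb{Z}^*}l(i,j)(\omega)\phi_{i,j}(x,v(x))$ on $(i-\delta,i+\delta)$. *)

(* Defs.v *)
From Stdlib Require Import Reals Lra ZArith List ClassicalEpsilon.
From Coquelicot Require Import Coquelicot.
Open Scope R_scope.

Definition indic (P : R -> Prop) (x : R) : R :=
  if excluded_middle_informative (P x) then 1 else 0.

(* A_r = R \ U_{i in Z} (i - r, i + r).  A = A_delta, A_eps = A_(delta+eps). *)
Definition setA (r : R) (x : R) : Prop :=
  forall i : Z, ~ (IZR i - r < x < IZR i + r).

Definition smooth1 (f : R -> R) : Prop := forall (n : nat) (x : R), ex_derive_n f n x.

Fixpoint iter_partial (l : list bool) (g : R -> R -> R) : R -> R -> R :=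
  match l with
  | nil => g
  | b :: l' =>
      let h := iter_partial l' g in
      if b then (fun x s => Derive (fun t => h t s) x)
      else (fun x s => Derive (fun t => h x t) s)
  end.

Definition smooth2 (g : R -> R -> R) : Prop :=
  forall (l : list bool) (x s : R),
    ex_derive (fun t => iter_partial l g t s) x /\
    ex_derive (fun t => iter_partial l g x t) s /\
    continuous (fun p : R * R => iter_partial l g (fst p) (snd p)) (x, s).

Definition sumZ (f : Z -> R) : R :=
  Series (fun n : nat => f (Z.of_nat n)) + Series (fun n : nat => f (- Z.of_nat n - 1)%Z).

(* phi_{i,j}(x,s) = phi((x,s) - (i,j)) with j = k + 1/2 in Z* (k : Z). *)
Definition phi_ij (phi : R -> R -> R) (i k : Z) (x s : R) : R :=
  phi (x - IZR i) (s - (IZR k + /2)).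

(* Blocked path (for fixed omega: l i k stands for l(i, k+1/2)(omega)). *)
Definition blocked_path (delta F : R) (chi : R -> R) (phi : R -> R -> R)
    (l : Z -> Z -> R) (v : R -> R) : Prop :=
  (forall x, ex_derive v x) /\ (forall x, continuous (Derive v) x) /\
  (forall (i : Z) (x : R), IZR i + delta < x < IZR i + 1 - delta ->
     is_derive (Derive v) x (- F * chi x)) /\
  (forall (i : Z) (x : R), IZR i - delta < x < IZR i + delta ->
     is_derive (Derive v) x (sumZ (fun k => l i k * phi_ij phi i k x (v x)))).

Definition vhat (delta : R) (v : R -> R) (i : Z) : R :=
  v (IZR i - delta) + 2 * delta * Derive v (IZR i - delta).

Definition is_min_deltaZ (delta y j : R) : Prop :=
  (exists k : Z, j = delta * IZR k) /\ y <= j /\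
  (forall k : Z, y <= delta * IZR k -> j <= delta * IZR k).

Definition interp_affine (delta : R) (val : Z -> R) (w : R -> R) : Prop :=
  (forall x, continuity_pt w x) /\
  (forall i : Z, exists a b : R, forall x, IZR i - 1 + delta <= x <= IZR i + delta ->
       w x = a * x + b) /\
  (forall i : Z, w (IZR i + delta) = val i).

(* Main.v *)
Require Import Defs.
From Stdlib Require Import Reals ZArith Lra Psatz ClassicalEpsilon.
From Coquelicot Require Import Coquelicot.
Open Scope R_scope.

Lemma series_nonneg (a : nat -> R) : (forall n, 0 <= a n) -> 0 <= Series a.
Proof.
  intros Ha. unfold Series.
  assert (Hs : forall n, 0 <= sum_n a n).
  { induction n. rewrite sum_O; auto. rewrite sum_Sn. unfold plus; simpl.
    specialize (Ha (S n)). lra. }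
  assert (H := Lim_seq_le_loc (fun _ => 0) (sum_n a) (filter_forall _ Hs)).
  rewrite Lim_seq_const in H.
  destruct (Lim_seq (sum_n a)); simpl in *; lra.
Qed.

Lemma sumZ_nonneg (f : Z -> R) : (forall k, 0 <= f k) -> 0 <= sumZ f.
Proof.
  intros H. unfold sumZ.
  assert (0 <= Series (fun n : nat => f (Z.of_nat n))) by (apply series_nonneg; auto).
  assert (0 <= Series (fun n : nat => f (- Z.of_nat n - 1)%Z)) by (apply series_nonneg; auto).
  lra.
Qed.

Lemma incr (f df : R -> R) (a b : R) : a <= b ->
  (forall x, a < x < b -> is_derive f x (df x)) ->
  (forall x, a <= x <= b -> continuity_pt f x) ->
  (forall x, a <= x <= b -> 0 <= df x) -> f a <= f b.
Proof.
  intros Hab Hd Hc Hp.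
  destruct (MVT_gen f a b df) as [c [Hc1 Hc2]].
  - rewrite Rmin_left, Rmax_right by lra. auto.
  - rewrite Rmin_left, Rmax_right by lra. auto.
  - rewrite Rmin_left, Rmax_right in Hc1 by lra.
    specialize (Hp c Hc1). nra.
Qed.

Lemma affine_le (p r x a1 b1 a2 b2 c : R) : p < r -> p <= x <= r ->
  a1 * p + b1 <= a2 * p + b2 + c -> a1 * r + b1 <= a2 * r + b2 + c ->
  a1 * x + b1 <= a2 * x + b2 + c.
Proof.
  intros Hpr Hx H1 H2.
  set (d := a1 - a2). set (e := b1 - b2 - c).
  assert (E : (r - p) * (d * x + e) = (r - x) * (d * p + e) + (x - p) * (d * r + e)) by (unfold d, e; ring).
  assert (dp : d * p + e <= 0) by (unfold d, e; lra).
  assert (dr : d * r + e <= 0) by (unfold d, e; lra).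
  assert ((r - x) * (d * p + e) <= 0) by nra.
  assert ((x - p) * (d * r + e) <= 0) by nra.
  assert (d * x + e <= 0) by nra.
  unfold d, e in *. lra.
Qed.

Lemma vbar_le (delta y j : R) : 0 < delta -> is_min_deltaZ delta y j -> j <= y + delta.
Proof.
  intros Hd [_ [_ Hm]].
  destruct (archimed (y / delta)) as [H1 H2].
  specialize (Hm (up (y / delta))).
  assert (E : delta * (y / delta) = y) by (field; lra).
  assert (delta * (y / delta) < delta * IZR (up (y / delta))) by (apply Rmult_lt_compat_l; lra).
  assert (delta * IZR (up (y / delta)) <= delta * (y / delta + 1)) by (apply Rmult_le_compat_l; lra).
  assert (j <= delta * IZR (up (y / delta))) by (apply Hm; lra).
  nra.
Qed.

Lemma der_aff (v D : R -> R) (m c x : R) : is_derive v x (D x) ->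
  is_derive (fun t => v t - (m * t + c)) x (D x - m).
Proof.
  intros H.
  assert (H2 : is_derive (fun t : R => m * t + c) x m) by (auto_derive; [auto | ring]).
  exact (is_derive_minus _ _ _ _ _ H H2).
Qed.

Lemma cont_of_der (v D : R -> R) x : is_derive v x (D x) -> continuity_pt v x.
Proof.
  intros H. apply continuity_pt_filterlim.
  exact (ex_derive_continuous (K:=R_AbsRing) (V:=R_NormedModule) v x (ex_intro _ _ H)).
Qed.

Lemma cont_aff (v D : R -> R) m c x : is_derive v x (D x) -> continuity_pt (fun t => v t - (m * t + c)) x.
Proof.
  intros H. apply (cont_of_der _ (fun t => D t - m)). apply der_aff. exact H.
Qed.

Lemma D_up (D g : R -> R) (lo hi a b : R) : (forall x, continuous D x) ->
  (forall x, lo < x < hi -> is_derive D x (g x)) -> (forall x, 0 <= g x) ->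
  lo <= a -> a <= b -> b <= hi -> D a <= D b.
Proof.
  intros Hc Hd Hg H1 H2 H3.
  apply (incr D g a b H2).
  - intros x Hx. apply Hd. lra.
  - intros x _. apply continuity_pt_filterlim. apply Hc.
  - intros; apply Hg.
Qed.

Lemma D_down (D g : R -> R) (lo hi a b : R) : (forall x, continuous D x) ->
  (forall x, lo < x < hi -> is_derive D x (g x)) -> (forall x, g x <= 0) ->
  lo <= a -> a <= b -> b <= hi -> D b <= D a.
Proof.
  intros Hc Hd Hg H1 H2 H3.
  assert (- D a <= - D b); [|lra].
  apply (incr (fun x => - D x) (fun x => - g x) a b H2).
  - intros x Hx. apply (is_derive_opp D x (g x)). apply Hd. lra.
  - intros x _. apply continuity_pt_opp. apply continuity_pt_filterlim. apply Hc.
  - intros; specialize (Hg x); lra.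
Qed.

Lemma tan_below (v D : R -> R) (q r x : R) : (forall t, is_derive v t (D t)) ->
  (forall a b, q <= a -> a <= b -> b <= r -> D a <= D b) -> q <= x <= r ->
  v q + D q * (x - q) <= v x.
Proof.
  intros Hv Hm Hx.
  assert (H := incr (fun t => v t - (D q * t + (v q - D q * q))) (fun t => D t - D q) q x
    (proj1 Hx) (fun t _ => der_aff v D _ _ t (Hv t)) (fun t _ => cont_aff v D _ _ t (Hv t))).
  simpl in H. assert (forall t, q <= t <= x -> 0 <= D t - D q).
  { intros t Ht. assert (D q <= D t) by (apply Hm; lra). lra. }
  specialize (H H0). lra.
Qed.

Lemma tan_above (v D : R -> R) (p q x : R) : (forall t, is_derive v t (D t)) ->
  (forall a b, p <= a -> a <= b -> b <= q -> D b <= D a) -> p <= x <= q ->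
  v x <= v q + D q * (x - q).
Proof.
  intros Hv Hm Hx.
  assert (H := incr (fun t => v t - (D q * t + (v q - D q * q))) (fun t => D t - D q) x q
    (proj2 Hx) (fun t _ => der_aff v D _ _ t (Hv t)) (fun t _ => cont_aff v D _ _ t (Hv t))).
  simpl in H. assert (forall t, x <= t <= q -> 0 <= D t - D q).
  { intros t Ht. assert (D q <= D t) by (apply Hm; lra). lra. }
  specialize (H H0). lra.
Qed.

Lemma concave_pos (v D : R -> R) (p q x m c : R) : (forall t, is_derive v t (D t)) ->
  (forall a b, p <= a -> a <= b -> b <= q -> D b <= D a) -> p <= x <= q ->
  m * p + c <= v p -> m * q + c <= v q -> m * x + c <= v x.
Proof.
  intros Hv Hm Hx Hp Hq.
  destruct (Rle_or_lt (m * x + c) (v x)) as [|Hlt]; auto. exfalso.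
  destruct (Req_dec x p) as [->|Hxp]; [lra|].
  destruct (Req_dec x q) as [->|Hxq]; [lra|].
  set (g := fun t => v t - (m * t + c)).
  destruct (MVT_gen g p x (fun t => D t - m)) as [c1 [Hc1 E1]].
  { intros t _. apply der_aff. apply Hv. }
  { intros t _. apply cont_aff with (D := D). apply Hv. }
  destruct (MVT_gen g x q (fun t => D t - m)) as [c2 [Hc2 E2]].
  { intros t _. apply der_aff. apply Hv. }
  { intros t _. apply cont_aff with (D := D). apply Hv. }
  rewrite Rmin_left, Rmax_right in Hc1, Hc2 by lra.
  assert (D c2 <= D c1) by (apply Hm; lra).
  unfold g in E1, E2.
  assert (x - p > 0) by lra. assert (q - x > 0) by lra.
  assert (D c1 - m < 0) by nra. assert (D c2 - m > 0) by nra. lra.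
Qed.

Theorem mainTheorem4 (delta F eps : R) (phi : R -> R -> R) (l : Z -> Z -> R)
    (chi : R -> R) (v w wbar : R -> R) (vbar : Z -> R) :
  0 < delta -> delta < /2 -> 0 < F -> 0 < eps -> delta + eps < /2 ->
  smooth2 phi -> (forall x s, 0 <= phi x s) ->
  (forall x s, ~ (Rabs x <= delta /\ Rabs s <= delta) -> phi x s = 0) ->
  (forall i k, 0 <= l i k) ->
  smooth1 chi ->
  (forall x, indic (setA (delta + eps)) x <= chi x <= indic (setA delta) x) ->
  blocked_path delta F chi phi l v ->
  (forall i : Z, is_min_deltaZ delta (vhat delta v i - delta / 2) (vbar i)) ->
  interp_affine delta (vhat delta v) w ->
  interp_affine delta vbar wbar ->
  forall x : R, w x <= v x /\ wbar x <= v x + delta / 2.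
Proof.
  intros Hd Hd2 HF He Hde _ Hphi _ Hl _ Hchi [Hex [Hcont [Hmid Hbump]]] Hvbar
    [_ [Hwa Hwv]] [_ [Hba Hbv]] x.
  set (D := Derive v).
  assert (Hv : forall t, is_derive v t (D t)) by (intro t; apply Derive_correct; apply Hex).
  assert (Dup : forall i a b, IZR i - delta <= a -> a <= b -> b <= IZR i + delta -> D a <= D b).
  { intros i a b H1 H2 H3.
    apply (D_up D (fun t => sumZ (fun k => l i k * phi_ij phi i k t (v t))) (IZR i - delta) (IZR i + delta));
      auto.
    intro t. apply sumZ_nonneg. intro k. apply Rmult_le_pos; auto. unfold phi_ij; auto. }
  assert (Ddown : forall j a b, IZR j + delta <= a -> a <= b -> b <= IZR j + 1 - delta -> D b <= D a).
  { intros j a b H1 H2 H3.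
    apply (D_down D (fun t => - F * chi t) (IZR j + delta) (IZR j + 1 - delta)); auto.
    - intros t Ht. apply (Hmid j t Ht).
    - intro t. assert (0 <= chi t).
      { destruct (Hchi t) as [H _]. unfold indic in H.
        destruct (excluded_middle_informative _); lra. }
      nra. }
  assert (cb : forall i, vhat delta v i <= v (IZR i + delta)).
  { intro i. unfold vhat.
    assert (H := tan_below v D (IZR i - delta) (IZR i + delta) (IZR i + delta) Hv
      (fun a b => Dup i a b) ltac:(lra)).
    fold D. replace (IZR i + delta - (IZR i - delta)) with (2 * delta) in H by ring. lra. }
  set (i := up (x - delta)).
  destruct (archimed (x - delta)) as [Hi1 Hi2]. fold i in Hi1, Hi2.
  set (p := IZR i - 1 + delta). set (q := IZR i - delta). set (r := IZR i + delta).
  assert (Ep : IZR (i - 1) + delta = p) by (unfold p; rewrite minus_IZR; simpl; ring).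
  assert (Hx : p <= x <= r) by (unfold p, r; lra).
  assert (Hpq : p < q) by (unfold p, q; lra).
  assert (Hqr : q < r) by (unfold q, r; lra).
  destruct (Hwa i) as [a [b Hab]].
  destruct (Hba i) as [a' [b' Hab']].
  assert (Wr : a * r + b = v q + D q * (r - q)).
  { rewrite <- Hab by (unfold r; lra). unfold r. rewrite Hwv. unfold vhat. fold D.
    unfold q. ring. }
  assert (Wp : a * p + b = vhat delta v (i - 1)).
  { rewrite <- Hab by (unfold p; lra). rewrite <- Ep. apply Hwv. }
  assert (B : a * p + b <= v p) by (rewrite Wp, <- Ep; apply cb).
  assert (C : v p <= v q + D q * (p - q)).
  { apply (tan_above v D p q p Hv); [|lra].
    intros a0 b0 H1 H2 H3. apply (Ddown (i - 1)%Z); rewrite ?minus_IZR; simpl;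
      unfold p, q in *; lra. }
  assert (WL : forall y, p <= y <= r -> a * y + b <= D q * y + (v q - D q * q) + 0).
  { intros y Hy. apply (affine_le p r); auto; lra. }
  assert (Hw : w x <= v x).
  { rewrite Hab by (unfold p, r in Hx; lra).
    destruct (Rle_or_lt q x) as [Hqx|Hqx].
    - assert (H := tan_below v D q r x Hv (fun a0 b0 => Dup i a0 b0) ltac:(lra)).
      specialize (WL x Hx). lra.
    - apply (concave_pos v D p q x a b Hv); [| lra | exact B |].
      + intros a0 b0 H1 H2 H3. apply (Ddown (i - 1)%Z); rewrite ?minus_IZR; simpl;
          unfold p, q in *; lra.
      + specialize (WL q ltac:(lra)). lra. }
  split; auto.
  assert (Br : a' * r + b' <= a * r + b + delta / 2).
  { rewrite <- Hab by (unfold r; lra). rewrite <- Hab' by (unfold r; lra).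
    unfold r. rewrite Hwv, Hbv.
    assert (H := vbar_le delta _ _ Hd (Hvbar i)). lra. }
  assert (Bp : a' * p + b' <= a * p + b + delta / 2).
  { rewrite <- Hab by (unfold p; lra). rewrite <- Hab' by (unfold p; lra).
    rewrite <- Ep, Hwv, Hbv.
    assert (H := vbar_le delta _ _ Hd (Hvbar (i - 1)%Z)). lra. }
  assert (H := affine_le p r x a' b' a b (delta / 2) ltac:(lra) Hx Bp Br).
  rewrite Hab' by (unfold p, r in Hx; lra). rewrite Hab in Hw by (unfold p, r in Hx; lra). lra.
Qed.
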